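(* Let $P$ be a finite poset, let $D$ be a comparability digraph for $P$, let $\mu$ be a probability distribution on the chains of $P$ and let $\mathcal{C}_\mu$ be a random chain chosen according to $\mu$. Suppose that $\mathbb{P}(x\in \mathcal{C}_\mu)>0$ for every $x\in P$. Then for every set $S\subseteq P$, \[\mathrm{comp}(S)\geq \left({\max_{(x,y)\in E(D)}\mathbb{P}\left(y\in \mathcal{C}_\mu\mid x\in\mathcal{C}_\mu\right)}\right)^{-1}\left(|S| - \left({\min_{x\in P}\mathbb{P}\left(x\in\mathcal{C}_\mu\right)}\right)^{-1}\right).\]
   Context: A chain in a poset is a set of pairwise comparable elements. A comparability digraph for a poset $P$ is a directed graph $D$ with vertex set $P$ such that every arc $(x,y)\in E(D)$ joins comparable elements $x,y$, and for every pair of distinct comparable elements $x,y\in P$ exactly one of the arcs $(x,y)$, $(y,x)$ lies in $E(D)$ (the direction of an arc need not agree with the order). For $S\subseteq P$, $\mathrm{comp}(S)$ is the number of unordered pairs of distinct comparable elements of $S$. *)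

(* Defs.v *)
From HB Require Import structures.
From mathcomp Require Import all_boot all_order all_algebra.
Set Implicit Arguments. Unset Strict Implicit. Unset Printing Implicit Defensive.
Import Order.TTheory GRing.Theory Num.Theory.
Local Open Scope order_scope.

Definition is_chain (d : Order.disp_t) (T : finPOrderType d) (C : {set T}) : bool :=
  [forall x in C, forall y in C, x >=< y].

(* comp(S): number of unordered pairs {x,y} of distinct comparable elements of S,
   i.e. number of 2-element subsets of S whose elements are comparable. *)
Definition ncomp (d : Order.disp_t) (T : finPOrderType d) (S : {set T}) : nat :=
  #|[set A : {set T} | (A \subset S) && (#|A| == 2)
                        && [forall x in A, forall y in A, x >=< y]]|.

Definition comparability_digraph (d : Order.disp_t) (T : finPOrderType d)
  (D : rel T) : Prop :=
  (forall x y, D x y -> (x != y) && (x >=< y)) /\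
  (forall x y, x != y -> x >=< y -> D x y != D y x).

Local Open Scope ring_scope.

Definition chain_distribution (d : Order.disp_t) (T : finPOrderType d)
  (R : realFieldType) (mu : {set T} -> R) : Prop :=
  (forall C, 0 <= mu C) /\ (forall C, mu C != 0 -> is_chain C) /\
  (\sum_(C : {set T}) mu C = 1).

Definition prob_in (d : Order.disp_t) (T : finPOrderType d) (R : realFieldType)
  (mu : {set T} -> R) (x : T) : R :=
  \sum_(C : {set T} | x \in C) mu C.

Definition prob_cond (d : Order.disp_t) (T : finPOrderType d) (R : realFieldType)
  (mu : {set T} -> R) (x y : T) : R :=
  (\sum_(C : {set T} | (x \in C) && (y \in C)) mu C) / prob_in mu x.

(* max over arcs of D of the conditional probabilities (0 if D has no arcs;
   all values are nonnegative so this is the maximum when arcs exist). *)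
Definition max_cond (d : Order.disp_t) (T : finPOrderType d) (R : realFieldType)
  (mu : {set T} -> R) (D : rel T) : R :=
  \big[Num.max/0]_(p : T * T | D p.1 p.2) prob_cond mu p.1 p.2.

(* min over x in P of P(x in C_mu) (1 if P is empty; all values are <= 1). *)
Definition min_prob (d : Order.disp_t) (T : finPOrderType d) (R : realFieldType)
  (mu : {set T} -> R) : R :=
  \big[Num.min/1]_(x : T) prob_in mu x.

(* Main.v *)
Require Import Defs.
From HB Require Import structures.
From mathcomp Require Import all_boot all_order all_algebra.
Import Order.TTheory GRing.Theory Num.Theory.
Local Open Scope ring_scope.

Lemma bigmin_le_seq (T : eqType) (R : realFieldType) (F : T -> R) (r : seq T) x0 :
  x0 \in r -> \big[Num.min/1]_(x <- r) F x <= F x0.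
Proof.
elim: r => // a r IH; rewrite inE big_cons => /orP [/eqP -> | /IH H].
  by rewrite ge_min lexx.
by rewrite ge_min H orbT.
Qed.

Lemma le_bigmax_seq (T : eqType) (R : realFieldType) (P : pred T) (F : T -> R)
  (r : seq T) p0 : p0 \in r -> P p0 -> F p0 <= \big[Num.max/0]_(p <- r | P p) F p.
Proof.
elim: r => // a r IH; rewrite inE big_cons => /orP [/eqP <- | /IH H] Hp.
  by rewrite Hp le_max lexx.
case: (P a); last exact: H Hp.
by rewrite le_max H // orbT.
Qed.

Theorem mainTheorem7 (d : Order.disp_t) (T : finPOrderType d) (R : realFieldType)
  (D : rel T) (mu : {set T} -> R)
  (hD : comparability_digraph D) (hmu : chain_distribution mu)
  (hpos : forall x : T, 0 < prob_in mu x) (S : {set T}) :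
  (max_cond mu D)^-1 * ( (#|S|%:R : R) - (min_prob mu)^-1) <= (ncomp S)%:R.
Proof.
case: hmu => mu0 [muchain mu1].
set m := min_prob mu. set M := max_cond mu D.
have m_gt0 : 0 < m.
  rewrite /m /min_prob; apply: (big_ind (fun v => 0 < v)) => //.
  by move=> a b ha hb; rewrite lt_min ha hb.
have m_le x : m <= prob_in mu x.
  by rewrite /m /min_prob; apply: bigmin_le_seq; rewrite mem_index_enum.
have M_ge0 : 0 <= M.
  rewrite /M /max_cond; apply: (big_ind (fun v => 0 <= v)) => //.
    by move=> a b ha hb; rewrite le_max ha.
  move=> [x y] _ /=; rewrite /prob_cond divr_ge0 ?sumr_ge0 ?ltW //.
have M_le x y : D x y -> prob_cond mu x y <= M.
  move=> Dxy; rewrite /M /max_cond.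
  exact: (@le_bigmax_seq _ _ (fun p : T*T => D p.1 p.2)
            (fun p => prob_cond mu p.1 p.2) _ (x,y)) (mem_index_enum _) Dxy.
pose f x := (prob_in mu x)^-1.
have f_le x : f x <= m^-1 by rewrite /f lef_pV2 ?posrE ?hpos.
have f_ge0 x : 0 <= f x by rewrite /f invr_ge0 ltW.
have claim C : is_chain C ->
  \sum_x (if (x \in S) && (x \in C) then f x else 0) <= m^-1 +
  \sum_x \sum_y (if [&& x \in S, y \in S, D x y, x \in C & y \in C] then f x else 0).
  move=> hC.
  set X := [set x | (x \in S) && (x \in C)].
  have -> : \sum_x (if (x \in S) && (x \in C) then f x else 0) = \sum_(x in X) f x.
    by rewrite [RHS]big_mkcond; apply: eq_bigr => x _; rewrite inE.
  have -> : \sum_x \sum_y (if [&& x \in S, y \in S, D x y, x \in C & y \in C] then f x else 0)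
      = \sum_(x in X) \sum_(y in X | D x y) f x.
    rewrite [RHS]big_mkcond; apply: eq_bigr => x _; rewrite inE.
    case: (boolP ((x \in S) && (x \in C))) => [/andP[xS xC] | nx].
      rewrite [RHS]big_mkcond; apply: eq_bigr => y _; rewrite inE xS xC /=.
      by case: (y \in S); case: (D x y); case: (y \in C).
    apply: big1 => y _.
    by move: nx; case: (x \in S); case: (x \in C); rewrite //= ?andbF.
  pose b x := [exists y in X, D x y].
  have h1 : \sum_(x in X | b x) f x <= \sum_(x in X) \sum_(y in X | D x y) f x.
    rewrite [leRHS](bigID b) /= -[leLHS]addr0; apply: lerD.
      apply: ler_sum => x /andP[xX /existsP[y0 /andP[y0X Dy0]]].
      rewrite (bigD1 y0) /=; last by rewrite y0X.
      by rewrite lerDl; apply: sumr_ge0 => *; exact: f_ge0.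
    by apply: sumr_ge0 => x _; apply: sumr_ge0 => *; exact: f_ge0.
  have h2 : \sum_(x in X | ~~ b x) f x <= m^-1.
    case: (pickP [pred x | (x \in X) && ~~ b x]) => [x0 /andP[x0X nb0] | none].
      rewrite (big_pred1 x0) ?f_le // => x /=.
      case: (eqVneq x x0) => [-> | nx]; first by rewrite x0X nb0.
      apply/negP => /andP[xX nbx].
      have xC : x \in C by move: xX; rewrite inE => /andP[].
      have x0C : x0 \in C by move: x0X; rewrite inE => /andP[].
      have cmp : (x >=< x0)%O.
        by move/forallP: hC => /(_ x) /implyP /(_ xC) /forallP /(_ x0) /implyP /(_ x0C).
      have := hD.2 x x0 nx cmp.
      case Dx: (D x x0).
        by move: nbx; rewrite /b; move/existsP => []; exists x0; rewrite x0X Dx.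
      case Dx0: (D x0 x) => // _.
      by move: nb0; rewrite /b; move/existsP => []; exists x; rewrite xX Dx0.
    rewrite big_pred0 ?invr_ge0 ?ltW // => x; exact: none.
  by rewrite (bigID b) /= addrC; apply: lerD h2 h1.
have e1 : (#|S|%:R : R) =
    \sum_C mu C * \sum_x (if (x \in S) && (x \in C) then f x else 0).
  under eq_bigr => C _ do rewrite mulr_sumr.
  rewrite exchange_big /= -sumr_const big_mkcond /=; apply: eq_bigr => x _.
  case xS: (x \in S) => /=; last by rewrite big1 // => C _; rewrite mulr0.
  rewrite -[LHS](mulfV (lt0r_neq0 (hpos x))) /prob_in mulr_suml [LHS]big_mkcond.
  by apply: eq_bigr => C _ /=; case: ifP; rewrite ?mulr0 ?mul0r.
have key : (#|S|%:R : R) <= m^-1 +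
    \sum_x \sum_y (if [&& x \in S, y \in S & D x y] then prob_cond mu x y else 0).
  rewrite e1.
  apply: le_trans (_ : \sum_C mu C * (m^-1 + \sum_x \sum_y
     (if [&& x \in S, y \in S, D x y, x \in C & y \in C] then f x else 0)) <= _).
    apply: ler_sum => C _; case: (eqVneq (mu C) 0) => [->|nz]; first by rewrite !mul0r.
    by apply: ler_wpM2l; [exact: mu0 | apply: claim; exact: muchain].
  under eq_bigr => C _ do rewrite mulrDr.
  rewrite big_split /= -mulr_suml mu1 mul1r lerD2l le_eqVlt; apply/orP; left; apply/eqP.
  under eq_bigr => C _ do rewrite mulr_sumr.
  rewrite exchange_big /=; apply: eq_bigr => x _.
  under eq_bigr => C _ do rewrite mulr_sumr.
  rewrite exchange_big /=; apply: eq_bigr => y _.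
  case: (x \in S); case: (y \in S); case: (D x y) => /=;
    try by rewrite big1 // => C _; rewrite mulr0.
  rewrite /prob_cond mulr_suml [RHS]big_mkcond.
  by apply: eq_bigr => C _ /=; case: ifP; rewrite ?mulr0 ?mul0r.
pose A := [set q : T * T | [&& q.1 \in S, q.2 \in S & D q.1 q.2]].
have cardA : (#|A| <= ncomp S)%N.
  rewrite /ncomp.
  have inj : {in A &, injective (fun q : T*T => [set q.1; q.2])}.
    move=> [a b] [c e] /=; rewrite !inE => /and3P[aS bS Dab] /and3P[_ _ Dce] eq.
    have ha : a \in [set c; e] by rewrite -eq set21.
    have hb : b \in [set c; e] by rewrite -eq set22.
    have [nab cab] := andP (hD.1 _ _ Dab).
    have [nce _] := andP (hD.1 _ _ Dce).
    case/set2P: ha => ea; case/set2P: hb => eb; subst.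
    - by rewrite eqxx in nab.
    - by [].
    - have := hD.2 e c (nab) cab. by rewrite Dab Dce.
    - by rewrite eqxx in nab.
  rewrite -(card_in_imset inj); apply: subset_leq_card.
  apply/subsetP => _ /imsetP[[a b] qA ->] /=.
  move: qA; rewrite inE /= => /and3P[aS bS Dab].
  have [nab cab] := andP (hD.1 _ _ Dab).
  rewrite inE subUset !sub1set aS bS cards2 nab /=.
  apply/forallP => u; apply/implyP => /set2P[]->; apply/forallP => v;
    apply/implyP => /set2P[]->; by rewrite ?comparablexx // comparable_sym.
have key2 : \sum_x \sum_y (if [&& x \in S, y \in S & D x y] then prob_cond mu x y else 0)
    <= M * (ncomp S)%:R.
  apply: le_trans (_ : \sum_x \sum_y (if [&& x \in S, y \in S & D x y] then M else 0) <= _).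
    apply: ler_sum => x _; apply: ler_sum => y _.
    by case: ifP => // /and3P[_ _ Dxy]; exact: M_le.
  rewrite pair_big /=.
  rewrite (eq_bigr (fun q : T * T => if q \in A then M else 0)); last first.
    by move=> q _; rewrite inE.
  rewrite -big_mkcond sumr_const -[M *+ _]mulr_natr.
  by apply: ler_wpM2l; [exact: M_ge0 | rewrite ler_nat].
case: (eqVneq M 0) => [->|Mnz]; first by rewrite invr0 mul0r ler0n.
have Mpos : 0 < M by rewrite lt_neqAle eq_sym Mnz M_ge0.
rewrite ler_pdivrMl // lerBlDl.
exact: le_trans key (lerD (lexx _) key2).
Qed.
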